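(* Let $(R,[\cdot_\lambda\cdot],\alpha,\beta)$ be a BiHom-Lie conformal superalgebra and let $k\geq 0$ be an integer. Then $(R,[\cdot_\lambda\cdot]',\alpha^{k+1},\beta^{k+1})$, where $[a_\lambda b]'=[\alpha^k(a)_\lambda\beta^k(b)]$, is a BiHom-Lie conformal superalgebra.
   Context: All spaces are over $\mathbb{C}$. For a $\mathbb{C}[\partial]$-module $V$, $V[\lambda]=\mathbb{C}[\lambda]\otimes V$. $|a|$ denotes the parity of a homogeneous element. In $[x_{-\lambda-\partial}y]$ one writes $[x_\lambda y]=\sum_n\lambda^nc_n$ and replaces $\lambda$ by $-\lambda-\partial$, $\partial$ acting on the $c_n$. A BiHom-Lie conformal superalgebra $(R,[\cdot_\lambda\cdot],\alpha,\beta)$ is a $\mathbb{Z}_2$-graded $\mathbb{C}[\partial]$-module $R=R_0\oplus R_1$ with two commuting linear maps $\alpha,\beta:R\to R$ and a $\mathbb{C}$-linear map $R\otimes R\to R[\lambda]$, $a\otimes b\mapsto[a_\lambda b]$, with $[R_{i\,\lambda}R_j]\subseteq R_{i+j}[\lambda]$, such that for all homogeneous $a,b,c\in R$: (1) $\alpha\partial=\partial\alpha$, $\beta\partial=\partial\beta$; (2) $\alpha([a_\lambda b])=[\alpha(a)_\lambda\alpha(b)]$, $\beta([a_\lambda b])=[\beta(a)_\lambda\beta(b)]$; (3) $[(\partial a)_\lambda b]=-\lambda[a_\lambda b]$, $[a_\lambda(\partial b)]=(\partial+\lambda)[a_\lambda b]$; (4) $[\beta(a)_\lambda\alpha(b)]=-(-1)^{|a||b|}[\beta(b)_{-\lambda-\partial}\alpha(a)]$;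 (5) $[\alpha\beta(a)_\lambda[b_\mu c]]=[[\beta(a)_\lambda b]_{\lambda+\mu}\beta(c)]+(-1)^{|a||b|}[\beta(b)_\mu[\alpha(a)_\lambda c]]$. *)

(* Defs.v *)
From mathcomp Require Import all_boot all_algebra.
From mathcomp Require Import complex.
From mathcomp Require Import Rstruct.
Set Implicit Arguments. Unset Strict Implicit. Unset Printing Implicit Defensive.
Import GRing.Theory.
Local Open Scope ring_scope.

Definition CC : fieldType := (Rdefinitions.R)[i].

Section BiHomLCSA.
Variable V : lmodType CC.

(* An element of V[lambda] is represented by its list of coefficients
   s = [:: c_0; c_1; ...], i.e. sum_n lambda^n c_n; coefficients are read
   with [coef s n] (0 beyond the list), so trailing zeros are irrelevant. *)
Definition coef (s : seq V) (n : nat) : V := nth 0 s n.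

(* coefficient of lambda^n in  lambda * p(lambda) *)
Definition lam_mul_coef (s : seq V) (n : nat) : V :=
  if n is n'.+1 then coef s n' else 0.

(* coefficient of lambda^k in  sum_m (-lambda - d)^m c_m
   = sum_{m >= k} (-1)^m binom(m,k) d^(m-k) c_m *)
Definition subst_coef (d : V -> V) (s : seq V) (k : nat) : V :=
  \sum_(m < size s | (k <= m)%N)
     (((-1) ^+ m * ('C(m, k))%:R : CC) *: iter (m - k) d (coef s m)).

(* sign (-1)^{|a||b|} for parities i j (false = even, true = odd) *)
Definition psign (i j : bool) : CC := if i && j then -1 else 1.

Definition is_lin (f : V -> V) : Prop :=
  forall (k : CC) x y, f (k *: x + y) = k *: f x + f y.

(* (R, [._lambda .], alpha, beta) is a BiHom-Lie conformal superalgebra,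
   where R = V is a Z2-graded C[d]-module with homogeneous components
   par false (= R_0) and par true (= R_1), and br a b is [a_lambda b]. *)
Definition BiHomLCSA (par : bool -> pred V) (d : V -> V)
    (br : V -> V -> seq V) (al be : V -> V) : Prop :=
  [/\ is_lin d,
      (forall i, 0 \in par i),
      (forall i (k : CC) x y, x \in par i -> y \in par i -> k *: x + y \in par i),
      (forall x, exists x0 x1, [/\ x0 \in par false, x1 \in par true & x = x0 + x1]) &
      (forall x, x \in par false -> x \in par true -> x = 0)] /\
  (forall i x, x \in par i -> d x \in par i) /\
  [/\ is_lin al, is_lin be,
      (forall x, al (be x) = be (al x)),
      (forall i x, x \in par i -> al x \in par i) &
      (forall i x, x \in par i -> be x \in par i)] /\
  [/\ (forall (k : CC) a a' b n,
         coef (br (k *: a + a') b) n = k *: coef (br a b) n + coef (br a' b) n),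
      (forall (k : CC) a b b' n,
         coef (br a (k *: b + b')) n = k *: coef (br a b) n + coef (br a b') n) &
      (forall i j a b n, a \in par i -> b \in par j ->
         coef (br a b) n \in par (i (+) j))] /\
  (forall x, al (d x) = d (al x)) /\ (forall x, be (d x) = d (be x)) /\
  (forall a b n, al (coef (br a b) n) = coef (br (al a) (al b)) n) /\
  (forall a b n, be (coef (br a b) n) = coef (br (be a) (be b)) n) /\
  (forall a b n, coef (br (d a) b) n = - lam_mul_coef (br a b) n) /\
  (forall a b n, coef (br a (d b)) n = d (coef (br a b) n) + lam_mul_coef (br a b) n) /\
  (* axiom (4): skew-symmetry, coefficientwise in lambda *)
  (forall i j a b n, a \in par i -> b \in par j ->
     coef (br (be a) (al b)) n = - (psign i j *: subst_coef d (br (be b) (al a)) n)) /\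
  (* axiom (5): BiHom-Jacobi identity, coefficient of lambda^p mu^q *)
  (forall i j a b c p q, a \in par i -> b \in par j ->
     coef (br (al (be a)) (coef (br b c) q)) p =
       \sum_(r < p.+1)
          (('C(p - r + q, q))%:R : CC) *: coef (br (coef (br (be a) b) r) (be c)) (p - r + q)
       + psign i j *: coef (br (be b) (coef (br (al a) c) p)) q).

End BiHomLCSA.

(* Main.v *)
Require Import Defs.
From mathcomp Require Import all_boot all_algebra.
From mathcomp Require Import complex.
From mathcomp Require Import Rstruct.
Local Open Scope ring_scope.

Section Helpers.
Variable V : lmodType CC.

Lemma iter_lin (f : V -> V) n : is_lin f -> is_lin (iter n f).
Proof. move=> Hf; elim: n => [|n IH] k x y //=. by rewrite IH Hf. Qed.

Lemma iter_par (par : bool -> pred V) (f : V -> V) n :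
  (forall i x, x \in par i -> f x \in par i) ->
  forall i x, x \in par i -> iter n f x \in par i.
Proof. move=> Hf i x Hx; elim: n => [|n IH] //=; exact: Hf. Qed.

Lemma iter_comm (f g : V -> V) n : (forall x, f (g x) = g (f x)) ->
  forall x, iter n f (g x) = g (iter n f x).
Proof. move=> H x; elim: n => [|n IH] //=; by rewrite IH H. Qed.

Lemma iter_comm2 (f g : V -> V) n m : (forall x, f (g x) = g (f x)) ->
  forall x, iter n f (iter m g x) = iter m g (iter n f x).
Proof.
move=> H x; elim: m => [|m IH] //=. rewrite iter_comm //. by rewrite IH.
Qed.

Lemma iter_coef (br : V -> V -> seq V) (f : V -> V) n :
  (forall a b m, f (coef (br a b) m) = coef (br (f a) (f b)) m) ->
  forall a b m, iter n f (coef (br a b) m) = coef (br (iter n f a) (iter n f b)) m.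
Proof. move=> H a b m; elim: n => [|n IH] //=; by rewrite IH H. Qed.

End Helpers.

Theorem mainTheorem3 (V : lmodType CC) (par : bool -> pred V) (d : V -> V)
    (br : V -> V -> seq V) (al be : V -> V) (k : nat) :
  BiHomLCSA par d br al be ->
  BiHomLCSA par d (fun a b => br (iter k al a) (iter k be b))
    (iter k.+1 al) (iter k.+1 be).
Proof.
rewrite /BiHomLCSA.
move=> [[Hd H0 Hcl Hdec H01] [Hdpar [[Hal Hbe Hab Halp Hbep]
  [[Hbl Hbr Hbp] [Had [Hbd [Halc [Hbec [Hd1 [Hd2 [Hsk Hjac]]]]]]]]]]].
have Ab : forall n m x, iter n al (iter m be x) = iter m be (iter n al x).
  by move=> n m; apply: iter_comm2.
have Ab1 : forall n x, iter n al (be x) = be (iter n al x).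
  by move=> n; apply: iter_comm.
have Ba1 : forall n x, iter n be (al x) = al (iter n be x).
  by move=> n; apply: iter_comm => x; rewrite Hab.
have Ad : forall n x, iter n al (d x) = d (iter n al x).
  by move=> n; apply: iter_comm.
have Bd : forall n x, iter n be (d x) = d (iter n be x).
  by move=> n; apply: iter_comm.
have Ac : forall n a b m, iter n al (coef (br a b) m) = coef (br (iter n al a) (iter n al b)) m.
  by move=> n; apply: iter_coef.
have Bc : forall n a b m, iter n be (coef (br a b) m) = coef (br (iter n be a) (iter n be b)) m.
  by move=> n; apply: iter_coef.
have AL : is_lin (iter k al) by apply: iter_lin.
have BL : is_lin (iter k be) by apply: iter_lin.
have AP : forall n i x, x \in par i -> iter n al x \in par i.
  by move=> n; apply: iter_par.
have BP : forall n i x, x \in par i -> iter n be x \in par i.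
  by move=> n; apply: iter_par.
split; first by split.
split; first done.
split.
  split.
  - exact: iter_lin.
  - exact: iter_lin.
  - move=> x. rewrite (Ab k.+1 k.+1). done.
  - exact: AP.
  - exact: BP.
split.
  split.
  - by move=> c a a' b n; rewrite AL Hbl.
  - by move=> c a b b' n; rewrite BL Hbr.
  - move=> i j a b n Ha Hb; apply: Hbp; [exact: AP | exact: BP].
split; first by move=> x; rewrite Ad.
split; first by move=> x; rewrite Bd.
split.
  move=> a b n; rewrite Ac; congr (coef (br _ _) _).
  - by rewrite -!iterD addnC.
  - by rewrite Ab.
split.
  move=> a b n; rewrite Bc; congr (coef (br _ _) _).
  - by rewrite Ab.
  - by rewrite -!iterD addnC.
split; first by move=> a b n; rewrite Ad Hd1.
split; first by move=> a b n; rewrite Bd Hd2.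
split.
  move=> i j a b n Ha Hb /=.
  set a2 := iter k al (iter k be a).
  set b2 := iter k al (iter k be b).
  have E1 : iter k al (iter k.+1 be a) = be a2 by rewrite /a2 -Ab1.
  have E2 : iter k be (iter k.+1 al b) = al b2 by rewrite /b2 Ab Ba1.
  have E3 : iter k al (iter k.+1 be b) = be b2 by rewrite /b2 -Ab1.
  have E4 : iter k be (iter k.+1 al a) = al a2 by rewrite /a2 Ab Ba1.
  rewrite E1 E2 E3 E4; apply: Hsk; apply: AP; apply: BP; done.
move=> i j a b c p q Ha Hb /=.
set a1 := iter (k + k) al (iter k be a).
set b1 := iter k be (iter k al b).
set c1 := iter (k + k) be c.
have E1 : iter k al (iter k.+1 al (iter k.+1 be a)) = al (be a1).
  by rewrite /a1 -iterD addnS /= Ab1.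
have E2 : forall x y, iter k be (coef (br (iter k al x) (iter k be y)) q)
   = coef (br (iter k be (iter k al x)) (iter (k + k) be y)) q.
  by move=> x y; rewrite Bc iterD.
rewrite E1 E2 -/b1 -/c1.
rewrite (Hjac i j); last first.
  - by rewrite /b1; apply: BP; apply: AP.
  - by rewrite /a1; apply: AP; apply: BP.
congr (_ + _).
  apply: eq_bigr => r _; congr (_ *: _).
  rewrite Ac; congr (coef (br (coef (br _ _) _) _) _).
  - by rewrite /a1 -iterD -Ab1.
  - by rewrite /b1 Ab.
  - by rewrite /c1 -iterSr /= -iterD.
congr (_ *: _).
rewrite Bc; congr (coef (br _ (coef (br _ _) _)) _).
- by rewrite /b1 Ab1 Ab.
- by rewrite /a1 -iterSr /= Ba1 -iterD; congr al; apply: Ab.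
- by rewrite /c1 iterD.
Qed.
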